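(* Let $G$ be a subgroup of $S_n$, $\chi$ a character of $G$ and $\theta\in S_n$. Then $$d_\chi^G(P_\theta+P_{\theta^{-1}})=2^{F+2t}\,d_\chi^G(S_\theta),$$ where $F$ is the number of fixed points of $\theta$ and $t$ is the number of transpositions (2-cycles) in the disjoint cycles expression of $\theta$.
   Context: $d_\chi^G(A)=\sum_{\sigma\in G}\chi(\sigma)\prod_{i=1}^nA_{i\,\sigma(i)}$, where $\chi$ is the trace of a finite-dimensional complex representation of $G$. For $\theta\in S_n$, $(P_\theta)_{ij}=1$ if $\theta^{-1}(i)=j$ and $0$ otherwise. $S_\theta$ is the $n\times n$ symmetric $0/1$ matrix with $(S_\theta)_{ij}=1$ if $\theta(i)=j$ or $\theta^{-1}(i)=j$, and $0$ otherwise. *)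

(* Defs.v *)
From HB Require Import structures.
From mathcomp Require Import all_boot all_order all_algebra all_fingroup all_solvable all_field all_character.
Set Implicit Arguments. Unset Strict Implicit. Unset Printing Implicit Defensive.
Import Order.TTheory GRing.Theory Num.Theory.
Local Open Scope ring_scope.

Definition gmf n (G : {group 'S_n}) (chi : 'CF(G)) (A : 'M[algC]_n) : algC :=
  \sum_(s in G) chi s * \prod_(i < n) A i (s i).

Definition Pmx n (th : 'S_n) : 'M[algC]_n :=
  \matrix_(i, j) ((th^-1)%g i == j)%:R.

Definition Smx n (th : 'S_n) : 'M[algC]_n :=
  \matrix_(i, j) ((th i == j) || ((th^-1)%g i == j))%:R.

Definition nfix n (th : 'S_n) : nat := #|[set i | th i == i]|.

Definition ntransp n (th : 'S_n) : nat := #|[set C in porbits th | #|C| == 2]|.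

(* Main.v *)
Require Import Defs.
From HB Require Import structures.
From mathcomp Require Import all_boot all_order all_algebra all_fingroup all_solvable all_field all_character.
Import Order.TTheory GRing.Theory Num.Theory.
Local Open Scope ring_scope.

Lemma porbit_card2 n (th : 'S_n) (x : 'I_n) :
  (#|porbit th x| == 2)%N = (th x != x) && (th (th x) == x).
Proof.
have trI := porbit_traject th x.
have uI := uniq_traject_porbit th x.
have itI := iter_porbit th x.
apply/eqP/andP => [h2|[h1 h2]].
  rewrite h2 /= in uI itI; rewrite itI; split => //.
  by move: uI; rewrite /= inE andbT eq_sym.
have -> : porbit th x = [set x; th x].
  apply/setP => y; rewrite !inE; apply/porbitP/idP => [[i ->]|].
    elim: i => [|i IH]; first by rewrite expg0 perm1 eqxx.
    rewrite expgSr permM; case/orP: IH => /eqP ->; first by rewrite eqxx orbT.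
    by rewrite (eqP h2) eqxx.
  case/orP=> /eqP ->; first by exists 0%N; rewrite expg0 perm1.
  by exists 1%N; rewrite expg1.
by rewrite cards2 eq_sym h1.
Qed.

Lemma count_fix2 n (th : 'S_n) :
  #|[set i | th (th i) == i]| = (nfix th + 2 * ntransp th)%N.
Proof.
rewrite -(cardID [set i | th i == i] [set i | th (th i) == i]) /nfix; congr (_ + _)%N.
  by apply: eq_card => i; rewrite !inE; case: (eqVneq (th i) i) => [e|]; rewrite ?andbF // !e eqxx.
have -> : #|[predD [set i | th (th i) == i] & [set i | th i == i]]| =
          #|[set i | #|porbit th i| == 2]|.
  by apply: eq_card => i; rewrite !inE porbit_card2 andbC.
rewrite /ntransp mulnC -sum_nat_const.
rewrite -sum1_card.
transitivity (\sum_(i | #|porbit th i| == 2%N) \sum_(C in [set C in porbits th | #|C| == 2%N]) ((i \in C) : nat))%N.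
  apply: eq_big => [i|i]; first by rewrite inE.
  rewrite inE => hi.
  rewrite (bigD1 (porbit th i)) /=; last by rewrite inE hi andbT; apply: imset_f.
  rewrite porbit_id big1 // => C /andP[]; rewrite inE => /andP[/imsetP[y _ ->] _] hC.
  apply/eqP; rewrite eqb0; apply/negP => hiy.
  by rewrite eq_sym eq_porbit_mem hiy in hC.
rewrite exchange_big /=; apply: eq_big => [C //|C]; rewrite inE => /andP[/imsetP[y _ ->] hC].
rewrite -{2}(eqP hC) -sum1_card big_mkcond [RHS]big_mkcond /=; apply: eq_bigr => i _.
case: (boolP (i \in porbit th y)) => hiy.
  have e : porbit th i = porbit th y by apply/eqP; rewrite eq_porbit_mem.
  by rewrite e hC.
by case: ifP.
Qed.

Theorem mainTheorem10 (n : nat) (G : {group 'S_n}) (chi : 'CF(G))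
  (Hchi : chi \is a character) (th : 'S_n) :
  gmf chi (Pmx th + Pmx (th^-1)%g) =
  2%:R ^+ (nfix th + 2 * ntransp th) * gmf chi (Smx th).
Proof.
pose c (i : 'I_n) : algC := if th (th i) == i then 2%:R else 1.
have entry : forall i j, (Pmx th + Pmx (th^-1)%g) i j = c i * Smx th i j.
  move=> i j; rewrite !mxE invgK /c.
  case: ifP => [/eqP h|h].
    have -> : (th^-1)%g i = th i by rewrite -{1}h permK.
    by case: (th i == j); rewrite /= ?mulr1 ?mulr0 ?addr0.
  rewrite mul1r; case: eqP => [ea|ea]; case: eqP => [eb|eb] //=.
  - by move: h; rewrite -eb in ea; rewrite -ea permKV eqxx.
  - by rewrite addr0.
  - by rewrite add0r.
  - by rewrite addr0.
have -> : 2%:R ^+ (nfix th + 2 * ntransp th) = 2%:R ^+ #|[set i | th (th i) == i]| :> algC .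
  by congr (_ ^+ _); rewrite count_fix2.
rewrite /gmf mulr_sumr; apply: eq_bigr => s _.
rewrite mulrCA; congr (_ * _).
rewrite (eq_bigr (fun i => c i * Smx th i (s i))) ?big_split /=; last by move=> i _; rewrite entry.
congr (_ * _); rewrite /c -big_mkcond /= -prodr_const.
by apply: eq_bigl => i; rewrite inE.
Qed.
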